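(* Let $R$, $G$, $*$, $\sigma$ and $\mathcal{S}$ be as in the context, and suppose $\mathcal{S}$ is anticommutative. For $x\in G$ put $c_x=x^*x^{-1}$. Then: - for every $x\in G$, $x^*=c_x x$, with $c_x\in G_*\cap\mathcal{Z}(G)$ and $c_x^2=1$; - for all $x,y\in G$, $c_{xy}=c_xc_y(x,y)$; - if $(x,y)\neq 1$, then $c_{xy}\in\{c_x,\ c_y,\ (x,y)\}$.
   Context: Throughout, $R$ is a commutative ring with unity with $\operatorname{char}(R)\neq 2$, and $\mathcal{U}(R)$ is its unit group. $G$ is a group with an involution $*$, i.e. a map $x\mapsto x^*$ with $(xy)^*=y^*x^*$ and $(x^* )^*=x$. The map $\sigma:G\to\mathcal{U}(R)$ is a nontrivial group homomorphism with kernel $N=\ker\sigma$, and it is compatible with $*$: $xx^*\in N$ for all $x\in G$. The group ring $RG$ carries the involution $\left(\sum_{x\in G}\alpha_x x\right)^{\sigma*}=\sum_{x\in G}\sigma(x)\alpha_x x^*$. Write $G_*=\{x\in G: x^*=x\}$ and $N_*=G_*\cap N$. Let $\mathcal{S}$ be the $R$-submodule of $RG$ spanned by the union of the following three sets: - $2\mathcal{S}_1=\{2x: x\in N_*\}$; - $\mathcal{S}_2=\{\alpha x: x\in G_*\setminus N,\ \alpha\in R,\ \alpha(1-\sigma(x))=0\}$; - $\mathcal{S}_3=\{x+\sigma(x)x^*: x\in G\setminus G_*\}$. $\mathcal{S}$ is called anticommutative if $ab+ba=0$ for all $a,b\in\mathcal{S}$. $\mathcal{Z}(G)$ is the center of $G$,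 and the commutator is $(x,y)=x^{-1}y^{-1}xy$. *)

(* Defs.v *)
From HB Require Import structures.
From mathcomp Require Import all_boot all_order all_algebra.
Set Implicit Arguments. Unset Strict Implicit. Unset Printing Implicit Defensive.
Import GRing.Theory.

Section GroupRing.
Variables (R : comNzRingType) (G : groupType).

(* An element of the group ring RG is represented by a finite formal sum
   sum_i r_i g_i, given as a list of pairs (r_i, g_i). *)
Definition grp_ring := seq (R * G).

Definition gr_coef (a : grp_ring) (g : G) : R :=
  (\sum_(p <- a | p.2 == g) p.1)%R.

Definition gr_eq (a b : grp_ring) : Prop := forall g, gr_coef a g = gr_coef b g.

Definition gr_add (a b : grp_ring) : grp_ring := a ++ b.

Definition gr_scale (r : R) (a : grp_ring) : grp_ring :=
  [seq ((r * p.1)%R, p.2) | p <- a].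

Definition gr_mul (a b : grp_ring) : grp_ring :=
  [seq ((p.1 * q.1)%R, (p.2 * q.2)%g) | p <- a, q <- b].

Definition gr_zero : grp_ring := [::].

Definition is_group_involution (star : G -> G) : Prop :=
  (forall x y : G, star (x * y)%g = (star y * star x)%g) /\
  (forall x : G, star (star x) = x).

Definition is_unit_hom (sigma : G -> R) : Prop :=
  (forall x : G, exists y : R, (sigma x * y)%R = 1%R) /\
  (forall x y : G, sigma (x * y)%g = (sigma x * sigma y)%R).

Definition in_N (sigma : G -> R) (x : G) : Prop := sigma x = 1%R.
Definition in_Gstar (star : G -> G) (x : G) : Prop := star x = x.

Definition S_gen (star : G -> G) (sigma : G -> R) (a : grp_ring) : Prop :=
  (exists x : G, in_Gstar star x /\ in_N sigma x /\ a = [:: (2%:R%R, x)]) \/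
  (exists (x : G) (alpha : R), in_Gstar star x /\ ~ in_N sigma x /\
       (alpha * (1 - sigma x))%R = 0%R /\ a = [:: (alpha, x)]) \/
  (exists x : G, ~ in_Gstar star x /\ a = [:: (1%R, x); (sigma x, star x)]).

Definition in_S (star : G -> G) (sigma : G -> R) (a : grp_ring) : Prop :=
  exists l : seq (R * grp_ring),
    (forall p, p \in l -> S_gen star sigma p.2) /\
    gr_eq a (flatten [seq gr_scale p.1 p.2 | p <- l]).

Definition S_anticommutative (star : G -> G) (sigma : G -> R) : Prop :=
  forall a b, in_S star sigma a -> in_S star sigma b ->
    gr_eq (gr_add (gr_mul a b) (gr_mul b a)) gr_zero.

End GroupRing.

Definition cx (G : groupType) (star : G -> G) (x : G) : G := (star x * x^-1)%g.

Definition in_center (G : groupType) (z : G) : Prop := forall y : G, (z * y)%g = (y * z)%g.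

(* Main.v *)
Require Import Defs.
From HB Require Import structures.
From mathcomp Require Import all_boot all_order all_algebra.
Set Implicit Arguments. Unset Strict Implicit. Unset Printing Implicit Defensive.
Import GRing.Theory.

Section Proofs.
Variables (R : comNzRingType) (G : groupType) (star : G -> G) (sigma : G -> R).
Hypotheses (char_not2 : (2%:R%R : R) != 0%R)
    (Hstar : is_group_involution star)
    (Hsigma : is_unit_hom sigma)
    (Hcompat : forall x : G, sigma (x * star x)%g = 1%R)
    (Hanti : S_anticommutative star sigma).

Local Open Scope ring_scope.

Lemma starM x y : star (x * y)%g = (star y * star x)%g. Proof. exact: Hstar.1. Qed.
Lemma starK x : star (star x) = x. Proof. exact: Hstar.2. Qed.
Lemma star1 : star 1%g = 1%g.
Proof. have h := starM 1 1; rewrite mulg1 in h. by apply: (mulgI (star 1)); rewrite -h mulg1. Qed.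
Lemma starV x : star (x^-1)%g = (star x)^-1%g.
Proof. have h := starM x^-1 x; rewrite mulVg star1 in h. by symmetry; apply: mulg1_eq; rewrite -h. Qed.
Lemma sigM x y : sigma (x * y)%g = sigma x * sigma y. Proof. exact: Hsigma.2. Qed.
Lemma sig_reg x r : sigma x * r = 0 -> r = 0.
Proof. case: (Hsigma.1 x) => u hu h. by rewrite -[r]mul1r -hu mulrAC h mul0r. Qed.
Lemma sig1 : sigma 1%g = 1.
Proof.
have h := sigM 1 1; rewrite mulg1 in h.
apply/eqP; rewrite -subr_eq0; apply/eqP; apply: (@sig_reg 1%g).
by rewrite mulrBr mulr1 -h subrr.
Qed.
Lemma sig_ne0 x : sigma x != 0.
Proof. apply/eqP => h; have := @sig_reg x 1; rewrite h mul0r => /(_ erefl) /eqP; by rewrite oner_eq0. Qed.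
Lemma mul_reg x r : r * sigma x = 0 -> r = 0.
Proof. by rewrite mulrC; apply: sig_reg. Qed.

Lemma coef_cons r h (l : grp_ring R G) g :
  gr_coef ((r, h) :: l) g = (if h == g then r else 0) + gr_coef l g.
Proof. by rewrite /gr_coef big_cons /=; case: eqP; rewrite ?add0r. Qed.
Lemma coef_nil g : gr_coef ([::] : grp_ring R G) g = 0.
Proof. by rewrite /gr_coef big_nil. Qed.

Lemma in_S_gen a : S_gen star sigma a -> in_S star sigma a.
Proof.
move=> h; exists [:: (1, a)]; split.
  by move=> p; rewrite inE => /eqP ->.
move=> g; rewrite /= cats0 /gr_coef /gr_scale big_map.
by apply: eq_bigr => p _; rewrite mul1r.
Qed.

Lemma anti_coef a b g : in_S star sigma a -> in_S star sigma b ->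
  gr_coef (gr_add (gr_mul a b) (gr_mul b a)) g = 0.
Proof. by move=> ha hb; rewrite (Hanti ha hb g) coef_nil. Qed.


Notation bx x := [:: (1, x); (sigma x, star x)].

Lemma gen_b x : star x != x -> in_S star sigma (bx x).
Proof. move=> h; apply: in_S_gen; right; right; exists x; split => //; exact/eqP. Qed.

Lemma gen_2 y : star y = y -> sigma y = 1 -> in_S star sigma [:: (2%:R, y)].
Proof. by move=> h1 h2; apply: in_S_gen; left; exists y. Qed.

Lemma two_eqm1 (r : R) : r = -1 -> r != 1.
Proof. move=> -> ; apply/eqP => h; move: char_not2; by rewrite mulr2n -{2}h addrN eqxx. Qed.

Lemma gen_2neg y : star y = y -> sigma y = -1 -> (2%:R + 2%:R : R) = 0 ->
  in_S star sigma [:: (2%:R, y)].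
Proof.
move=> h1 h2 h4; apply: in_S_gen; right; left; exists y, 2%:R; split => //; split.
  by move=> h; move: (two_eqm1 h2); rewrite h eqxx.
by split => //; rewrite h2 opprK mulrDr mulr1.
Qed.

Lemma sig_sym y : star y = y -> sigma y * sigma y = 1.
Proof. by move=> h; rewrite -sigM -{2}h Hcompat. Qed.

Lemma gen_alpha y : star y = y -> sigma y != 1 -> in_S star sigma [:: (1 + sigma y, y)].
Proof.
move=> h1 h2; apply: in_S_gen; right; left; exists y, (1 + sigma y); split => //; split.
  by move=> h; move: h2; rewrite h eqxx.
split => //; rewrite mulrBr !mulrDl !mul1r sig_sym // mulr1; by rewrite opprD addrA addrK subrr.
Qed.

Lemma four0 x : star x != x -> (2%:R + 2%:R : R) = 0.
Proof.
move=> hx.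
have := anti_coef x (gen_2 star1 sig1) (gen_b hx).
rewrite /gr_add /gr_mul /= !coef_cons coef_nil.
by rewrite !mul1g !mulg1 eqxx (negbTE hx) mulr1 mul1r !(addr0, add0r).
Qed.

Lemma alpha_ex x y : star x != x -> star y = y ->
  exists2 a : R, a != 0 & in_S star sigma [:: (a, y)].
Proof.
move=> hx hy; case: (eqVneq (sigma y) 1) => h1.
  by exists 2%:R => //; apply: gen_2.
case: (eqVneq (1 + sigma y) 0) => h2.
  exists 2%:R => //; apply: gen_2neg => //; last exact: (four0 hx).
  by apply/eqP; rewrite -addr_eq0 addrC h2.
by exists (1 + sigma y) => //; apply: gen_alpha.
Qed.

Lemma eqg_mull (a b c : G) : ((a * b)%g == (a * c)%g) = (b == c).
Proof. by apply/eqP/eqP => [/mulgI|->]. Qed.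
Lemma eqg_mulr (a b c : G) : ((b * a)%g == (c * a)%g) = (b == c).
Proof. by apply/eqP/eqP => [/mulIg|->]. Qed.

Lemma two_ne0 (u : R) : u + u = 0 -> (exists v, u * v = 1) -> False.
Proof.
move=> h [v hv]; move: char_not2; rewrite mulr2n -hv -mulrDl h mul0r eqxx //.
Qed.

Lemma partA x : star x != x ->
  (star x * star x = x * x)%g /\ (x * star x = star x * x)%g.
Proof.
move=> hx; have hx' : x != star x by rewrite eq_sym.
have := anti_coef (x * x)%g (gen_b hx) (gen_b hx).
rewrite /gr_add /gr_mul /= !coef_cons coef_nil.
rewrite eqxx eqg_mull (negbTE hx) eqg_mulr (negbTE hx).
case: eqP => [E1 _|_]; last first.
  rewrite !mulr1 !(addr0, add0r) => h; exfalso; apply: (two_ne0 h); by exists 1; rewrite mulr1.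
split => //.
have := anti_coef (x * star x)%g (gen_b hx) (gen_b hx).
rewrite /gr_add /gr_mul /= !coef_cons coef_nil.
rewrite eqxx eqg_mull (negbTE hx') E1 eqg_mull (negbTE hx').
case: eqP => [E2 _|_] //.
rewrite ?mulr1 ?mul1r !(addr0, add0r) => h; exfalso; apply: (two_ne0 h).
by case: (Hsigma.1 x) => v hv; exists v.
Qed.

Lemma cform x : star x != x ->
  [/\ star x = (cx star x * x)%g, (cx star x * cx star x = 1)%g,
      (cx star x * x = x * cx star x)%g, star (cx star x) = cx star x & cx star x != 1%g].
Proof.
move=> hx; have [H1 H2] := partA hx; rewrite /cx.
have H2' : (x^-1 * star x = star x * x^-1)%g.
  by apply: (mulgI x); rewrite mulVKg mulgA H2 mulgK.
split.
- by rewrite mulgVK.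
- by rewrite -mulgA (mulgA (x^-1)%g) H2' !mulgA H1 mulgK mulgV.
- by rewrite mulgVK mulgA H2 mulgK.
- rewrite starM starK starV.
  apply: (mulgI (star x)); apply: (mulIg x); rewrite mulVKg.
  by rewrite mulgA -(mulgA _ _ x) mulVg mulg1 H1.
- apply/eqP => /divg1_eq h; by rewrite h eqxx in hx.
Qed.
Lemma eqg_l1 (a b : G) : ((a * b)%g == b) = (a == 1%g).
Proof. by rewrite -{2}(mul1g b) eqg_mulr. Qed.
Lemma eqg_1l (a b : G) : (b == (a * b)%g) = (a == 1%g).
Proof. by rewrite eq_sym eqg_l1. Qed.

Lemma central_star x y : star x != x -> star y = y ->
  (cx star x * y = y * cx star x)%g.
Proof.
move=> hx hy; have [Ex Ecc Ecx Esc Ec1] := cform hx.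
move: (cx star x) Ex Ecc Ecx Esc Ec1 => c Ex Ecc Ecx Esc Ec1.
have [a ha hS] := alpha_ex hx hy.
have K g := anti_coef g hS (gen_b hx).
have := K (y * x)%g; rewrite /gr_add /gr_mul /= !coef_cons coef_nil Ex.
rewrite eqxx eqg_mull eqg_l1 (negbTE Ec1).
case: (eqVneq (x * y)%g (y * x)%g) => E.
  move=> _; have := K (y * (c * x))%g; rewrite /gr_add /gr_mul /= !coef_cons coef_nil Ex.
  rewrite eqxx eqg_mull eqg_1l (negbTE Ec1) E eqg_mull eqg_1l (negbTE Ec1).
  case: eqP => [E'|_].
    by move=> _; apply: (mulIg x); rewrite -mulgA -E mulgA E' mulgA.
  rewrite ?mulr1 ?mul1r !(addr0, add0r) => /mul_reg h; by rewrite h eqxx in ha.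
case: eqP => [E1|_]; last first.
  rewrite ?mulr1 ?mul1r !(addr0, add0r) => h; by rewrite h eqxx in ha.
move=> _; have := K (y * (c * x))%g; rewrite /gr_add /gr_mul /= !coef_cons coef_nil Ex.
rewrite eqxx eqg_mull eqg_1l (negbTE Ec1) E1 eqg_mull eqg_1l (negbTE Ec1).
case: eqP => [E2|_]; last first.
  rewrite ?mulr1 ?mul1r !(addr0, add0r) => /mul_reg h; by rewrite h eqxx in ha.
move=> _.
have E3 : (x * y = c * (y * x))%g.
  by rewrite -E1 !mulgA Ecc mul1g.
apply: (mulIg x); by rewrite -!mulgA -E3 E2.
Qed.
Lemma sum4 (b1 b2 b3 b4 g : G) (r1 r2 r3 r4 : R) :
  b1 != b2 -> b1 != b3 -> b1 != b4 -> b2 != b3 -> b2 != b4 -> b3 != b4 ->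
  let S := (if b1 == g then r1 else 0) + ((if b2 == g then r2 else 0) +
           ((if b3 == g then r3 else 0) + (if b4 == g then r4 else 0))) in
  S = 0 \/ (b1 = g /\ S = r1) \/ (b2 = g /\ S = r2) \/ (b3 = g /\ S = r3) \/ (b4 = g /\ S = r4).
Proof.
move=> n12 n13 n14 n23 n24 n34 S; rewrite /S.
case: (eqVneq b1 g) => [<-|_].
  by rewrite [b2 == _]eq_sym [b3 == _]eq_sym [b4 == _]eq_sym (negbTE n12) (negbTE n13) (negbTE n14) !addr0; right; left.
case: (eqVneq b2 g) => [<-|_].
  by rewrite [b3 == _]eq_sym [b4 == _]eq_sym (negbTE n23) (negbTE n24) !addr0 add0r; right; right; left.
case: (eqVneq b3 g) => [<-|_].
  by rewrite [b4 == _]eq_sym (negbTE n34) !addr0 !add0r; right; right; right; left.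
case: (eqVneq b4 g) => [<-|_].
  by rewrite !add0r; right; right; right; right.
by rewrite !add0r; left.
Qed.
Lemma inv_uniq (a b : G) : (a * a = 1 -> a * b = 1 -> b = a)%g.
Proof. by move=> h1 h2; rewrite -[b]mul1g -h1 -mulgA h2 mulg1. Qed.

Lemma key x y : star x != x -> star y != y -> cx star x != cx star y ->
  (cx star x * y != y * cx star x)%g ->
  sigma y = 1 /\ sigma x = -1 /\
  ((x * y = y * (cx star x * x))%g \/ (x * y = cx star y * (y * (cx star x * x)))%g).
Proof.
move=> hx hy hcd hcy.
have [Ex Ecc Ecx Esc Ec1] := cform hx; have [Ey Edd Edy Esd Ed1] := cform hy.
have Ecd := central_star hx Esd.
have K g := anti_coef g (gen_b hx) (gen_b hy).
move: (cx star x) (cx star y) Ex Ecc Ecx Esc Ec1 Ey Edd Edy Esd Ed1 Ecd hcd hcy =>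
  c d Ex Ecc Ecx Esc Ec1 Ey Edd Edy Esd Ed1 Ecd hcd hcy.
pose w := (y * c * y^-1)%g.
have hw : (w * y = y * c)%g by rewrite mulgVK.
have Eww : (w * w = 1)%g.
  apply: (mulIg y); rewrite mul1g -mulgA hw mulgA hw -mulgA Ecc mulg1 //.
have Ewd : (w * d = d * w)%g.
  apply: (mulIg y); rewrite -mulgA Edy mulgA hw -[RHS]mulgA hw mulgA Edy -!mulgA Ecd //.
clearbody w.
have wc : w != c by apply/eqP => e; move: hcy; rewrite -hw e eqxx.
have n12 : (y * x != y * (c * x))%g by rewrite eqg_mull eqg_1l.
have n13 : (y * x != d * y * x)%g by rewrite eqg_mulr eqg_1l.
have n14 : (y * x != d * y * (c * x))%g.
  rewrite Edy -mulgA eqg_mull mulgA eqg_1l; apply/eqP => hdc; move: hcd.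
  by rewrite -[c]mul1g -Edd -mulgA hdc mulg1 eqxx.
have n23 : (y * (c * x) != d * y * x)%g by rewrite Edy -mulgA eqg_mull eqg_mulr.
have n24 : (y * (c * x) != d * y * (c * x))%g by rewrite eqg_mulr eqg_1l.
have n34 : (d * y * x != d * y * (c * x))%g by rewrite eqg_mull eqg_1l.
have a4 : ((c * x * (d * y))%g == (x * y)%g) = false.
  apply/negbTE/eqP; rewrite Ecx -mulgA => /mulgI; rewrite mulgA => h.
  have hcd1 : (c * d = 1)%g by apply: (mulIg y); rewrite mul1g.
  by move: hcd; rewrite (inv_uniq Edd (etrans (esym Ecd) hcd1)) eqxx.
have C1 : (x * y = w * (y * x))%g /\ sigma x = -1 \/ (x * y = d * (y * x))%g /\ sigma y = -1 \/
            (x * y = d * (w * (y * x)))%g /\ 1 + sigma y * sigma x = 0.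
  have := K (x * y)%g; rewrite /gr_add /gr_mul /= !coef_cons coef_nil Ex Ey.
  rewrite eqxx eqg_mull eqg_l1 (negbTE Ed1) eqg_mulr eqg_l1 (negbTE Ec1) a4 /= !(add0r, addr0).
  case: (@sum4 _ _ _ _ (x * y)%g (1 * 1) (1 * sigma x) (sigma y * 1) (sigma y * sigma x) n12 n13 n14 n23 n24 n34) => [->|[[E ->]|[[E ->]|[[E ->]|[E ->]]]]].
  - by rewrite mulr1 addr0 => /eqP; rewrite oner_eq0.
  - rewrite mulr1 => h; exfalso; apply: (two_ne0 h); by exists 1; rewrite mulr1.
  - rewrite mulr1 mul1r => h; left; split; first by rewrite -E mulgA -hw -mulgA.
    by apply/eqP; rewrite -addr_eq0 addrC h.
  - rewrite !mulr1 => h; right; left; split; first by rewrite -E mulgA.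
    by apply/eqP; rewrite -addr_eq0 addrC h.
  - rewrite mulr1 => h; right; right; split => //.
    by rewrite -E -mulgA (mulgA y) -hw -mulgA.
have a2 : ((x * (d * y))%g == (c * x * y)%g) = false.
  by apply/negbTE; rewrite Ecx -mulgA eqg_mull eqg_mulr eq_sym.
have C2 : (c * (x * y) = y * x)%g /\ sigma x = -1 \/ (c * (x * y) = d * (y * x))%g /\ sigma x + sigma y = 0 \/
            (c * (x * y) = d * (w * (y * x)))%g /\ sigma x + sigma y * sigma x = 0.
  have := K (c * x * y)%g; rewrite /gr_add /gr_mul /= !coef_cons coef_nil Ex Ey.
  rewrite eqg_mulr eqg_1l (negbTE Ec1) a2 eqxx eqg_mull eqg_l1 (negbTE Ed1) /= !(add0r, addr0).
  case: (@sum4 _ _ _ _ (c * x * y)%g (1 * 1) (1 * sigma x) (sigma y * 1) (sigma y * sigma x) n12 n13 n14 n23 n24 n34) => [->|[[E ->]|[[E ->]|[[E ->]|[E ->]]]]].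
  - rewrite mulr1 addr0 => h; by move: (sig_ne0 x); rewrite h eqxx.
  - rewrite !mulr1 => h; left; split; first by rewrite E mulgA.
    by apply/eqP; rewrite -addr_eq0 h.
  - rewrite mulr1 mul1r => h; exfalso; apply: (two_ne0 h).
    by case: (Hsigma.1 x) => v hv; exists v.
  - rewrite !mulr1 => h; right; left; split => //; by rewrite mulgA -E mulgA.
  - move=> h; right; right; split; last by rewrite -h mulr1.
    by rewrite mulgA -E -mulgA (mulgA y) -hw -mulgA.
have Ecd1 : (c * d != 1)%g.
  apply/eqP => h; move: hcd; by rewrite (inv_uniq Edd (etrans (esym Ecd) h)) eqxx.
have Ecw1 : (c * w != 1)%g by apply/eqP => /(inv_uniq Ecc) e; rewrite e eqxx in wc.
case: C1 => [[P1 s1]|[[P1 t1]|[P1 ts1]]]; case: C2 => [[P2 r2]|[[P2 r2]|[P2 r2]]]; rewrite P1 in P2.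
- exfalso; move/eqP: Ecw1; apply; apply: (mulIg (y * x)%g); by rewrite mul1g -mulgA.
- split; first by move/eqP: r2; rewrite s1 addrC subr_eq0 => /eqP.
  split => //; left; by rewrite P1 mulgA hw -mulgA.
- by move/mulIg: P2 => e; rewrite e eqxx in hcd.
- exfalso; move/eqP: Ecd1; apply; apply: (mulIg (y * x)%g); by rewrite mul1g -mulgA.
- by move: P2; rewrite -{2}[(d * _)%g]mul1g => /mulIg e; rewrite e eqxx in Ec1.
- exfalso; move: P2; rewrite !mulgA => /mulIg /mulIg; rewrite Ecd => /mulgI e; by rewrite e eqxx in wc.
- split; last split => //; last by right; rewrite P1 (mulgA w) hw -mulgA.
  by move/eqP: ts1; rewrite r2 mulrN1 subr_eq0 eq_sym => /eqP.
- exfalso; move/eqP: Ecw1; apply; apply: (mulgI d); apply: (mulIg (y * x)%g).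
  by rewrite mulg1 !mulgA -Ecd -!mulgA.
- by move: P2; rewrite -{2}[(d * _)%g]mul1g => /mulIg e; rewrite e eqxx in Ec1.
Qed.

Lemma cx_eq z u : star z = (u * z)%g -> cx star z = u.
Proof. by move=> h; rewrite /cx h mulgK. Qed.

Lemma central x y : star x != x -> (cx star x * y = y * cx star x)%g.
Proof.
move=> hx; case: (eqVneq (star y) y) => hy; first exact: central_star.
have [Ex Ecc Ecx Esc Ec1] := cform hx; have [Ey Edd Edy Esd Ed1] := cform hy.
case: (eqVneq (cx star x) (cx star y)) => hcd; first by rewrite hcd.
case: (eqVneq (cx star x * y)%g (y * cx star x)%g) => // hcy.
have [t1 [s1 [P|P]]] := key hx hy hcd hcy.
- have Ez : star (x * y)%g = (cx star y * (x * y))%g.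
    by rewrite starM Ey Ex -mulgA -P.
  have hz : star (x * y)%g != (x * y)%g by rewrite Ez eqg_l1.
  have hcd' : cx star x != cx star (x * y)%g by rewrite (cx_eq Ez).
  have hcz : (cx star x * (x * y) != (x * y) * cx star x)%g.
    rewrite mulgA Ecx -!(mulgA x) eqg_mull; exact: hcy.
  have [t2 _] := key hx hz hcd' hcz.
  move: t2; rewrite sigM s1 t1 mulN1r => h.
  by move: (two_eqm1 (erefl (-1 : R))); rewrite h eqxx.
- have Ez : star (x * y)%g = (x * y)%g by rewrite starM Ey Ex -mulgA -P.
  have := central_star hx Ez; rewrite mulgA Ecx -!(mulgA x) => /mulgI h.
  by rewrite h eqxx in hcy.
Qed.

Lemma part1 x : star x = (cx star x * x)%g /\ star (cx star x) = cx star x /\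
  in_center (cx star x) /\ (cx star x * cx star x)%g = 1%g.
Proof.
case: (eqVneq (star x) x) => hx.
  have e : cx star x = 1%g by rewrite /cx hx mulgV.
  rewrite e mul1g hx star1 mulg1; split => //; split => //; split => // y.
  by rewrite mul1g mulg1.
have [Ex Ecc _ Esc _] := cform hx; do !split => //.
move=> y; exact: central hx.
Qed.

Lemma centralM (u v : G) : in_center u -> in_center v -> in_center (u * v)%g.
Proof. by rewrite /in_center => hu hv z; rewrite -mulgA (hv z) mulgA (hu z) -mulgA. Qed.

Lemma comm_lemma (x y a b e : G) : in_center a -> in_center b -> in_center e ->
  (a * a = 1 -> b * b = 1 -> e * e = 1 -> e * (x * y) = b * y * (a * x) ->
  e = a * b * [~ x, y])%g.
Proof.
move=> ha hb he haa hbb hee H.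
have hf := centralM he (centralM hb ha).
have hxy : (x * y = (e * (b * a)) * (y * x))%g.
  have H' : (b * y * (a * x) = (b * a) * (y * x))%g.
    by rewrite -!mulgA; congr (_ * _)%g; rewrite mulgA -(ha y) -mulgA.
  by rewrite -mulgA -H' -H mulgA hee mul1g.
have hk : ([~ x, y] = e * (b * a))%g.
  by rewrite commgEl conjgE hxy (hf (y * x)%g) -(mulgA y) !mulKg.
by rewrite hk -!mulgA (he (b * a)%g) -(mulgA b a e) (mulgA b b) hbb mul1g mulgA haa mul1g.
Qed.

Lemma part2 x y : cx star (x * y)%g = (cx star x * cx star y * [~ x, y])%g.
Proof.
have [Ex [_ [hx hxx]]] := part1 x; have [Ey [_ [hy hyy]]] := part1 y.
have [Exy [_ [hxy hxyxy]]] := part1 (x * y)%g.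
apply: (comm_lemma hx hy hxy hxx hyy hxyxy); by rewrite -Exy starM -Ex -Ey.
Qed.

Lemma part3 x y : ([~ x, y] != 1)%g ->
  cx star (x * y)%g = cx star x \/ cx star (x * y)%g = cx star y \/
  cx star (x * y)%g = [~ x, y]%g.
Proof.
move=> hk.
have [Ex [_ [ha haa]]] := part1 x; have [Ey [_ [hb hbb]]] := part1 y.
have [Exy [_ [he hee]]] := part1 (x * y)%g.
have P2 := part2 x y; have hC := commgC x y.
move: (cx star x) (cx star y) (cx star (x * y)%g) ([~ x, y]%g) Ex ha haa Ey hb hbb Exy he hee P2 hC hk
  => a b e k Ex ha haa Ey hb hbb Exy he hee P2 hC hk.
have Eyx : (y * x != x * y)%g.
  apply/eqP => h; move/eqP: hk; apply; apply: (mulgI (y * x)%g).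
  by rewrite -hC mulg1 h.
have kE : (k = b * (a * e))%g.
  by rewrite P2 -!mulgA (mulgA a a) haa mul1g (mulgA b b) hbb mul1g.
have hkc : in_center k by rewrite kE; apply: centralM hb (centralM ha he).
have xyk : (x * y = k * (y * x))%g by rewrite hC (hkc (y * x)%g).
have eq_k u : ((u * (y * x))%g == (x * y)%g) = (u == k) by rewrite xyk eqg_mulr.
case: (eqVneq a 1%g) => a1; case: (eqVneq b 1%g) => b1.
- by right; right; rewrite P2 a1 b1 !mul1g.
- have hx : star x = x by rewrite Ex a1 mul1g.
  have hy : star y != y by rewrite Ey eqg_l1.
  have [al hal hS] := alpha_ex hy hx.
  have := anti_coef (x * y)%g hS (gen_b hy); rewrite /gr_add /gr_mul /= !coef_cons coef_nil Ey.
  rewrite eqxx eqg_mull eqg_l1 (negbTE b1) (negbTE Eyx) -mulgA eq_k.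
  case: eqP => [bk _|_].
    by left; rewrite P2 a1 mul1g -bk hbb.
  rewrite mulr1 !(addr0, add0r) => h; by rewrite h eqxx in hal.
- have hy : star y = y by rewrite Ey b1 mul1g.
  have hx : star x != x by rewrite Ex eqg_l1.
  have [al hal hS] := alpha_ex hx hy.
  have := anti_coef (x * y)%g hS (gen_b hx); rewrite /gr_add /gr_mul /= !coef_cons coef_nil Ex.
  rewrite (negbTE Eyx) (mulgA y a x) -(ha y) -(mulgA a y x) eq_k eqxx -mulgA eqg_l1 (negbTE a1).
  case: eqP => [ak _|_].
    by right; left; rewrite P2 b1 mulg1 -ak haa.
  rewrite mul1r !(addr0, add0r) => h; by rewrite h eqxx in hal.
- have hx : star x != x by rewrite Ex eqg_l1.
  have hy : star y != y by rewrite Ey eqg_l1.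
  case: (eqVneq a b) => [ab|nab]; first by right; right; rewrite P2 ab hbb mul1g.
  case: (eqVneq a k) => [ak|nak].
    by right; left; rewrite P2 -ak (ha b) -mulgA haa mulg1.
  case: (eqVneq b k) => [bk|nbk]; first by left; rewrite P2 -bk -mulgA hbb mulg1.
  have A4 : ((a * x * (b * y))%g == (x * y)%g) = false.
    rewrite -mulgA (hb y) (mulgA x y b) -(hb (x * y)%g) (mulgA a b) eqg_l1.
    apply/negbTE/eqP => h; move/eqP: nab; apply; apply: (inv_uniq hbb).
    by rewrite (hb a).
  have := anti_coef (x * y)%g (gen_b hx) (gen_b hy); rewrite /gr_add /gr_mul /= !coef_cons coef_nil Ex Ey.
  rewrite eqxx eqg_mull eqg_l1 (negbTE b1) eqg_mulr eqg_l1 (negbTE a1) A4 (negbTE Eyx).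
  rewrite (mulgA y a x) -(ha y) -(mulgA a y x) eq_k (negbTE nak).
  rewrite -(mulgA b y x) eq_k (negbTE nbk).
  rewrite -(mulgA b y) (mulgA y a x) -(ha y) -(mulgA a y x) (mulgA b a) eq_k.
  case: eqP => [bak|_]; last first.
    by rewrite !(addr0, add0r) mulr1 => /eqP; rewrite oner_eq0.
  rewrite !(addr0, add0r) mulr1 => hts.
  have e1 : e = 1%g by rewrite P2 -bak -mulgA (mulgA b b) hbb mul1g haa.
  have hxy : star (x * y)%g = (x * y)%g by rewrite Exy e1 mul1g.
  have sxy : sigma (x * y)%g = -1.
    by rewrite sigM mulrC; apply/eqP; rewrite -addr_eq0 addrC hts.
  have hS := gen_2neg hxy sxy (four0 hx).
  have q1 : (x * y * (a * x) = a * (x * (y * x)))%g.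
    by rewrite (ha x) mulgA -(ha (x * y * x)%g) -(mulgA x y x).
  have q2 : (x * (x * y) = k * (x * (y * x)))%g.
    by rewrite {1}xyk mulgA -(hkc x) -mulgA.
  have := anti_coef (x * (x * y))%g hS (gen_b hx); rewrite /gr_add /gr_mul /= !coef_cons coef_nil Ex.
  rewrite -(mulgA x y x) eqg_mull (negbTE Eyx) q1 q2 eqg_mulr (negbTE nak) eqxx.
  rewrite -q2 -(mulgA a x) eqg_l1 (negbTE a1).
  rewrite mul1r !(addr0, add0r) => h; by move: char_not2; rewrite h eqxx.
Qed.
End Proofs.

Theorem lemma3p12 (R : comNzRingType) (G : groupType)
    (star : G -> G) (sigma : G -> R)
    (char_not2 : (2%:R%R : R) != 0%R)
    (Hstar : is_group_involution star)
    (Hsigma : is_unit_hom sigma)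
    (Hnontriv : exists x : G, sigma x != 1%R)
    (Hcompat : forall x : G, sigma (x * star x)%g = 1%R)
    (Hanti : S_anticommutative star sigma) :
  (forall x : G,
      star x = (cx star x * x)%g /\ star (cx star x) = cx star x /\
      in_center (cx star x) /\ (cx star x * cx star x)%g = 1%g) /\
  (forall x y : G, cx star (x * y)%g = (cx star x * cx star y * [~ x, y])%g) /\
  (forall x y : G, [~ x, y]%g <> 1%g ->
      cx star (x * y)%g = cx star x \/ cx star (x * y)%g = cx star y \/
      cx star (x * y)%g = [~ x, y]%g).
Proof.
split; first exact: (part1 char_not2 Hstar Hsigma Hcompat Hanti).
split; first exact: (part2 char_not2 Hstar Hsigma Hcompat Hanti).
move=> x y h; apply: (part3 char_not2 Hstar Hsigma Hcompat Hanti); exact/eqP.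
Qed.
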